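(* Let $(X,d)$ be a metric space, $p\in X$, and define $\mu_p(x,y)=d(x,y)+\sqrt{d(x,p)d(y,p)}$ for $x,y\in X$. Then for all $x,y,z,w\in X$, $$\mu_p(x,y)\mu_p(z,w)\leq 9\max\{\mu_p(x,z)\mu_p(y,w),\ \mu_p(x,w)\mu_p(y,z)\}.$$ *)

(* Defs.v *)
From Stdlib Require Import Reals.
Open Scope R_scope.

Definition is_metric {X : Type} (d : X -> X -> R) : Prop :=
  (forall x y, 0 <= d x y) /\
  (forall x y, d x y = 0 <-> x = y) /\
  (forall x y, d x y = d y x) /\
  (forall x y z, d x z <= d x y + d y z).

Definition mu {X : Type} (d : X -> X -> R) (p x y : X) : R :=
  d x y + sqrt (d x p * d y p).

(* Main.v *)
Require Import Defs.
From Stdlib Require Import Reals Lra Psatz.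
Open Scope R_scope.

Lemma sqrt_min_le a b : 0 <= a -> 0 <= b -> Rmin a b <= sqrt (a * b).
Proof.
  intros Ha Hb.
  assert (Hm : 0 <= Rmin a b) by (apply Rmin_glb; lra).
  rewrite <- (sqrt_square (Rmin a b)) at 1 by exact Hm.
  apply sqrt_le_1_alt.
  apply Rmult_le_compat; try lra; [apply Rmin_l | apply Rmin_r].
Qed.

Lemma mu_ge (X : Type) (d : X -> X -> R) (Hd : is_metric d) (p x y : X) :
  d x p <= mu d p x y.
Proof.
  destruct Hd as [H0 [_ [Hs Ht]]]. unfold mu.
  pose proof (sqrt_min_le (d x p) (d y p) (H0 _ _) (H0 _ _)).
  pose proof (Ht x y p). pose proof (H0 x y).
  unfold Rmin in H. destruct (Rle_dec (d x p) (d y p)); lra.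
Qed.

Lemma mu_quasi (X : Type) (d : X -> X -> R) (Hd : is_metric d) (p a b c : X) :
  mu d p a b <= 3 * Rmax (mu d p a c) (mu d p c b).
Proof.
  pose proof (mu_ge X d Hd p a c) as E1.
  pose proof (mu_ge X d Hd p b c) as E2.
  pose proof (mu_ge X d Hd p c b) as E2'.
  pose proof (mu_ge X d Hd p a b) as E3.
  destruct Hd as [H0 [_ [Hs Ht]]].
  assert (Hsq : sqrt (d a p * d b p) <= Rmax (d a p) (d b p)).
  { pose proof (H0 a p); pose proof (H0 b p).
    rewrite <- (sqrt_square (Rmax (d a p) (d b p))).
    2:{ unfold Rmax; destruct (Rle_dec (d a p) (d b p)); lra. }
    apply sqrt_le_1_alt. apply Rmult_le_compat; try lra;
    unfold Rmax; destruct (Rle_dec (d a p) (d b p)); lra. }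
  assert (m1 : mu d p b c = mu d p c b) by (unfold mu; rewrite Hs, Rmult_comm; reflexivity).
  pose proof (Ht a c b).
  assert (d a c <= mu d p a c) by (unfold mu; pose proof (sqrt_pos (d a p * d c p)); lra).
  assert (d c b <= mu d p c b) by (unfold mu; pose proof (sqrt_pos (d c p * d b p)); lra).
  unfold mu at 1. revert Hsq.
  unfold Rmax; destruct (Rle_dec (mu d p a c) (mu d p c b));
  destruct (Rle_dec (d a p) (d b p)); intros; lra.
Qed.

Lemma mu_sym (X : Type) (d : X -> X -> R) (Hd : is_metric d) (p a b : X) :
  mu d p a b = mu d p b a.
Proof. destruct Hd as [_ [_ [Hs _]]]. unfold mu; rewrite Hs, Rmult_comm; reflexivity. Qed.

Lemma prod_bound a b P Q : 0 <= a -> 0 <= b -> a <= 3 * P -> b <= 3 * Q -> a * b <= 9 * (P * Q).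
Proof. intros. assert (a * b <= (3*P)*(3*Q)) by (apply Rmult_le_compat; lra). lra. Qed.

Theorem lemma3p1 (X : Type) (d : X -> X -> R) (Hd : is_metric d) (p x y z w : X) :
  mu d p x y * mu d p z w <=
  9 * Rmax (mu d p x z * mu d p y w) (mu d p x w * mu d p y z).
Proof.
  assert (N : forall a b, 0 <= mu d p a b).
  { intros a b. pose proof (mu_ge X d Hd p a b). destruct Hd as [H0 _]. pose proof (H0 a p); lra. }
  assert (Q := mu_quasi X d Hd p).
  assert (S := mu_sym X d Hd p).
  set (A := mu d p x z). set (B := mu d p y w). set (C := mu d p x w). set (D := mu d p y z).
  assert (L1 : A * B <= Rmax (A * B) (C * D)) by apply Rmax_l.
  assert (L2 : C * D <= Rmax (A * B) (C * D)) by apply Rmax_r.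
  pose proof (Q x y z) as q1. pose proof (Q z w x) as q2.
  pose proof (Q x y w) as q3. pose proof (Q z w y) as q4.
  rewrite (S z y) in q1. rewrite (S z x) in q2. rewrite (S w y) in q3. rewrite (S z y) in q4.
  fold A B C D in q1, q2, q3, q4.
  assert (NA := N x z); assert (NB := N y w); assert (NC := N x w); assert (ND := N y z).
  fold A B C D in NA, NB, NC, ND.
  assert (Nxy := N x y); assert (Nzw := N z w).
  destruct (Rle_dec A D); destruct (Rle_dec A C); destruct (Rle_dec B C); destruct (Rle_dec B D);
  unfold Rmax in q1, q2, q3, q4;
  repeat match goal with
  | H : context [Rle_dec ?u ?v] |- _ => destruct (Rle_dec u v)
  end;
  first
  [ assert (mu d p x y * mu d p z w <= 9 * (C * D)) by (apply prod_bound; lra); lra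
  | assert (mu d p x y * mu d p z w <= 9 * (A * B)) by (apply prod_bound; lra); lra
  | assert (mu d p x y * mu d p z w <= 9 * (D * C)) by (apply prod_bound; lra); lra
  | assert (mu d p x y * mu d p z w <= 9 * (B * A)) by (apply prod_bound; lra); lra ].
Qed.
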